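(* Let $G$, $\mathrm{b}$, $(w_{ij})$, the update sequence $A$, Async-BP and the generalized computation trees $R_i^t$ be as in the context. Then Async-BP solves the minimum weight perfect tree-$\mathrm{b}$-matching problem on the generalized computation tree: for each vertex $i$ of $G$ and each $t$, the set $E_i(t)$ chosen at the end of iteration $t$ by Async-BP is exactly the set of $b_i$ edges attached to the root (via labels) in the minimum weight perfect tree-$\mathrm{b}$-matching of $R_i^t$.
   Context: Let $G=(V,E)$ be a finite undirected simple graph, $V=\{1,\dots,n\}$, with real edge weights $w_{ij}$ and positive integers $b_i$ with $\deg_G(i)\ge b_i+1$; $N(i)$ is the neighbour set of $i$. Let $\vec E=\{(i\to j):\{i,j\}\in E\}$ and let $A=(\vec E(1),\vec E(2),\dots)$ be a sequence of subsets of $\vec E$ such that if $(i\to j)\in\vec E(t)\cap\vec E(t+s)$ and $(i\to j)\notin\bigcup_{r=1}^{s-1}\vec E(t+r)$ then $(\ell\to i)\in\bigcup_{r=1}^{s-1}\vec E(t+r)$ for some $\ell\in N(i)\setminus\{j\}$. Async-BP: $m_{i\to j}(0)=w_{ij}$; for $t\ge1$, $m_{i\to j}(t)=w_{ij}-\big(b_i\text{-th smallest of }\{m_{\ell\to i}(t-1):\ell\in N(i)\setminus\{j\}\}\big)$ if $(i\to j)\in\vec E(t)$, else $m_{i\to j}(t)=m_{i\to j}(t-1)$; $E_i(t)$ consists of the $b_i$ edges $\{i,j\}$ whose incoming messages $m_{j\to i}(t)$ are smallest (neighbours ordered by nondecreasing incoming message). Computation branches: for $(i\to j)\in\vec E$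 and $t\ge0$, $R^t_{i\to j}$ is the rooted labelled tree whose root is labelled $j$ and has a single child labelled $i$; if $t=0$ it is just this edge; if $t>0$ and $(i\to j)\notin\vec E(t)$ then $R^t_{i\to j}=R^{t-1}_{i\to j}$; otherwise the node $i$ has $\deg_G(i)-1$ children labelled by the elements of $N(i)\setminus\{j\}$, and for each such child $r$, the subtree consisting of $r$, its descendants and the edge $\{r,i\}$ is a copy of $R^{t-1}_{r\to i}$. Each edge between nodes labelled $a,c$ has weight $w_{ac}$. The generalized computation tree $R_i^t$ is the rooted tree with root labelled $i$ whose branches from the root are the computation branches $R^t_{r\to i}$, $r\in N(i)$ (glued at their roots). A perfect tree-$\mathrm{b}$-matching of $R_i^t$ is a set of its edges such that every non-leaf node labelled $s$ is incident to exactly $b_s$ of them; the minimum weight one minimizes total weight. *)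

(* Defs.v *)
From HB Require Import structures.
From mathcomp Require Import all_boot all_order all_algebra.
Set Implicit Arguments. Unset Strict Implicit. Unset Printing Implicit Defensive.
Import Order.TTheory GRing.Theory Num.Theory.
Local Open Scope ring_scope.

Inductive ltree (V : Type) := LNode of V & seq (ltree V).

(* A tree together with a subset of its edges: each child edge carries a
   boolean saying whether the edge (parent -- child) is selected. *)
Inductive mtree (V : Type) := MNode of V & seq (bool * mtree V).

Section Defs.
Variables (R : realFieldType) (V : finType).
Variables (e : rel V) (w : V -> V -> R) (b : V -> nat).
Variable (A : nat -> {set V * V}).

Definition nbr (i : V) : {set V} := [set j | e i j].

(* k-th smallest (k >= 1) element of a finite list of reals (with multiplicity) *)
Definition kth_smallest (k : nat) (s : seq R) : R :=
  nth 0 (sort (fun x y : R => x <= y) s) k.-1.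

(* Async-BP messages: msg t i j = m_{i -> j}(t) *)
Fixpoint msg (t : nat) : V -> V -> R :=
  match t with
  | 0 => fun i j => w i j
  | t'.+1 => fun i j =>
      if (i, j) \in A t'.+1 then
        w i j - kth_smallest (b i) [seq msg t' l i | l <- enum (nbr i :\ j)]
      else msg t' i j
  end.

(* S is a valid choice of E_i(t): b_i neighbours of i whose incoming messages
   m_{j -> i}(t) are the smallest (ties broken arbitrarily). *)
Definition is_E (t : nat) (i : V) (S : {set V}) : Prop :=
  [/\ S \subset nbr i, #|S| = b i &
      forall j k, j \in S -> k \in nbr i :\: S -> msg t j i <= msg t k i].

(* branch t i j : the subtree of the computation branch R^t_{i -> j} hanging
   below the root j, i.e. the node labelled i together with its descendants. *)
Fixpoint branch (t : nat) (i j : V) : ltree V :=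
  match t with
  | 0 => LNode i [::]
  | t'.+1 =>
      if (i, j) \in A t'.+1 then
        LNode i [seq branch t' r i | r <- enum (nbr i :\ j)]
      else branch t' i j
  end.

Definition comp_tree (t : nat) (i : V) : ltree V :=
  LNode i [seq branch t r i | r <- enum (nbr i)].

Definition mlabel (m : mtree V) : V := let: MNode s _ := m in s.

Fixpoint erase (m : mtree V) : ltree V :=
  let: MNode s cs := m in LNode s [seq erase c.2 | c <- cs].

(* every non-leaf node labelled s is incident to exactly b s selected edges;
   pm says whether the edge to the parent is selected *)
Fixpoint perfect_from (pm : bool) (m : mtree V) : bool :=
  let: MNode s cs := m in
  (nilp cs || (count (fun c => c.1) cs + pm == b s)%N) &&
  all (fun c => perfect_from c.1 c.2) cs.

Definition perfect (m : mtree V) : bool := perfect_from false m.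

Fixpoint mweight (m : mtree V) : R :=
  let: MNode s cs := m in
  foldr (fun c acc => (if c.1 then w s (mlabel c.2) else 0) + mweight c.2 + acc) 0 cs.

Definition min_perfect_matching (T : ltree V) (M : mtree V) : Prop :=
  [/\ erase M = T, perfect M &
      forall M', erase M' = T -> perfect M' -> mweight M <= mweight M'].

Definition root_matched (M : mtree V) : {set V} :=
  let: MNode _ cs := M in
  [set x | has (fun c => c.1 && (mlabel c.2 == x)) cs].

End Defs.

(* Main.v *)
Require Import Defs.
From HB Require Import structures.
From mathcomp Require Import all_boot all_order all_algebra ring.
Import Order.TTheory GRing.Theory Num.Theory.
Local Open Scope ring_scope.
Set Implicit Arguments. Unset Strict Implicit.

Section Aux.
Variables (R : realFieldType) (V : finType).

Lemma fin_choice (T : Type) (x0 : T) (P : V -> T -> Prop) (s : seq V) :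
  (forall r, r \in s -> exists x, P r x) ->
  exists f : V -> T, forall r, r \in s -> P r (f r).
Proof.
elim: s => [|a s IH] H; first by exists (fun _ => x0).
have [xa Pa] := H a (mem_head _ _).
have [f Hf] : exists f : V -> T, forall r, r \in s -> P r (f r).
  by apply: IH => r rs; apply: H; rewrite inE rs orbT.
exists (fun r => if r == a then xa else f r) => r; rewrite inE.
by case: eqP => [-> //|_ /= rs]; apply: Hf.
Qed.

Lemma exch (C X Y : {set V}) (d : V -> R) :
  X \subset C -> Y \subset C -> #|X| = #|Y| ->
  (forall x y, x \in X -> y \in C :\: X -> d x <= d y) ->
  \sum_(r in X) d r <= \sum_(r in Y) d r.
Proof.
move=> XC YC cXY G.
rewrite (big_setID Y) [X in _ <= X](big_setID X) /= setIC lerD2l.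
have ck : #|X :\: Y| = #|Y :\: X|.
  by rewrite !cardsD setIC cXY.
case k0: #|Y :\: X| => [|k].
  move: ck; rewrite k0 => /eqP; rewrite cards_eq0 => /eqP ->.
  move/eqP: k0; rewrite cards_eq0 => /eqP ->.
  by rewrite !big_set0.
rewrite -(ler_pMn2r (R:=R) (ltn0Sn k)).
have -> : (\sum_(i in X :\: Y) d i) *+ k.+1 = \sum_(y in Y :\: X) \sum_(x in X :\: Y) d x.
  by rewrite sumr_const k0.
have -> : (\sum_(i in Y :\: X) d i) *+ k.+1 = \sum_(y in Y :\: X) \sum_(x in X :\: Y) d y.
  by rewrite -sumrMnl; apply: eq_bigr => y _; rewrite sumr_const ck k0.
apply: ler_sum => y yYX; apply: ler_sum => x xXY; apply: G.
  by move: xXY; rewrite inE => /andP[].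
move: yYX; rewrite !inE => /andP[-> yY] /=.
by move/subsetP: YC => /(_ _ yY) ->.
Qed.

End Aux.


Section Sort.
Variables (R : realFieldType) (V : finType) (C : {set V}) (d : V -> R).

Definition leV := fun x y : V => d x <= d y.
Definition ss := sort leV (enum C).
Definition Xq (q : nat) : {set V} := [set x in take q ss].

Lemma leV_tr : transitive leV.
Proof. by move=> y x z; rewrite /leV; apply: le_trans. Qed.
Lemma leV_total : total leV.
Proof. by move=> x y; rewrite /leV le_total. Qed.

Lemma mem_ss x : (x \in ss) = (x \in C).
Proof. by rewrite mem_sort mem_enum. Qed.
Lemma uniq_ss : uniq ss.
Proof. by rewrite sort_uniq enum_uniq. Qed.
Lemma size_ss : size ss = #|C|.
Proof. by rewrite size_sort cardE. Qed.
Lemma sorted_ss : sorted leV ss.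
Proof. exact: (sort_sorted leV_total). Qed.

Lemma Xq_sub q : Xq q \subset C.
Proof. by apply/subsetP=> x; rewrite inE => /mem_take; rewrite mem_ss. Qed.

Lemma card_Xq q : (q <= #|C|)%N -> #|Xq q| = q.
Proof.
move=> qC; rewrite cardsE; have/card_uniqP -> := take_uniq q uniq_ss.
by rewrite size_takel // size_ss.
Qed.

Lemma greedy_Xq q x y : x \in Xq q -> y \in C :\: Xq q -> d x <= d y.
Proof.
rewrite !inE => xt /andP[yt yC].
have := sorted_ss; rewrite (sorted_pairwise leV_tr) -(cat_take_drop q ss).
rewrite pairwise_cat => /andP[/allrelP H _]; apply: H => //.
have : y \in ss by rewrite mem_ss.
by rewrite -{1}(cat_take_drop q ss) mem_cat (negbTE yt).
Qed.

Lemma sum_Xq q : \sum_(r in Xq q) d r = \sum_(x <- take q [seq d r | r <- ss]) x.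
Proof.
rewrite -map_take big_map big_uniq ?take_uniq ?uniq_ss //.
by apply: eq_bigl => r; rewrite inE.
Qed.

Lemma map_ss : [seq d r | r <- ss] = sort <=%R [seq d r | r <- enum C].
Proof.
apply: (sorted_eq le_trans le_anti).
- by rewrite sorted_map; exact: sorted_ss.
- by apply: sort_sorted; exact: le_total.
- have h1 : perm_eq (sort <=%R [seq d r | r <- enum C]) [seq d r | r <- enum C].
    by apply: permEl; apply: perm_sort.
  have h2 : perm_eq ss (enum C) by apply: permEl; apply: perm_sort.
  by apply: (perm_trans (perm_map d h2)); rewrite perm_sym.
Qed.

Lemma sum_Xq_step q : (q < #|C|)%N ->
  \sum_(r in Xq q.+1) d r = \sum_(r in Xq q) d r + kth_smallest q.+1 [seq d r | r <- enum C].
Proof.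
move=> qC; rewrite !sum_Xq (take_nth 0) ?size_map ?size_ss //.
by rewrite -cats1 big_cat big_seq1 /kth_smallest /= map_ss.
Qed.

End Sort.


Section Tree.
Variables (R : realFieldType) (V : finType) (w : V -> V -> R) (b : V -> nat).

Definition llabel (T : ltree V) : V := let: LNode s _ := T in s.
Lemma mlabel_erase M : llabel (erase M) = mlabel M. Proof. by case: M. Qed.

Definition opt pm T M := [/\ erase M = T, perfect_from b pm M &
  forall M', erase M' = T -> perfect_from b pm M' -> mweight w M <= mweight w M'].

Lemma mweightE s cs : mweight w (MNode s cs) =
  \sum_(c <- cs) ((if c.1 then w s (mlabel c.2) else 0) + mweight w c.2).
Proof.
elim: cs => [|c cs IH]; first by rewrite big_nil.
by rewrite big_cons -IH.
Qed.

Lemma decomp (T : V -> ltree V) (s : seq V) (cs : seq (bool * mtree V)) :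
  uniq s -> [seq erase c.2 | c <- cs] = [seq T r | r <- s] ->
  exists g : V -> bool * mtree V,
    cs = [seq g r | r <- s] /\ forall r, r \in s -> erase (g r).2 = T r.
Proof.
elim: s cs => [|a s IH] [|c cs] //=.
  by move=> _ _; exists (fun r => (false, MNode r [::])).
move=> /andP[aS us] [ea ecs]; have [g [-> Hg]] := IH cs us ecs.
exists (fun r => if r == a then c else g r); split.
  rewrite eqxx; congr (_ :: _); apply/eq_in_map => r rs.
  by case: eqP => // ra; move: aS; rewrite -ra rs.
move=> r; rewrite inE; case: eqP => [-> //|_ /= rs]; exact: Hg.
Qed.

Lemma count_enumE (P : pred V) (C : {set V}) :
  count P (enum C) = #|[set r in C | P r]|.
Proof.
rewrite -sum1_count big_enum_cond -sum1_card.
by apply: eq_bigl => r; rewrite inE.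
Qed.

Definition dval s (Min Mout : V -> mtree V) r :=
  w s r + mweight w (Min r) - mweight w (Mout r).

Section Node.
Variables (s : V) (C : {set V}) (T : V -> ltree V) (Min Mout : V -> mtree V).
Hypothesis lab : forall r, r \in C -> llabel (T r) = r.
Hypothesis oin : forall r, r \in C -> opt true (T r) (Min r).
Hypothesis oout : forall r, r \in C -> opt false (T r) (Mout r).

Lemma weight_lb (g : V -> bool * mtree V) :
  (forall r, r \in C -> erase (g r).2 = T r /\ perfect_from b (g r).1 (g r).2) ->
  \sum_(r in C) mweight w (Mout r) + \sum_(r in [set r in C | (g r).1]) dval s Min Mout r
  <= mweight w (MNode s [seq g r | r <- enum C]).
Proof.
move=> Hg; rewrite mweightE big_map big_enum /=.
have -> : \sum_(r in [set r in C | (g r).1]) dval s Min Mout r =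
   \sum_(r in C | (g r).1) dval s Min Mout r by apply: eq_bigl => r; rewrite inE.
rewrite big_mkcondr /= -big_split /=; apply: ler_sum => r rC.
have [_ _ oi] := oin rC.
case: (Hg r rC); case: (g r) => [[] M] /= [eM pM].
  rewrite -mlabel_erase eM lab // /dval addrC subrK lerD2l; exact: oi.
have [_ _ oo] := oout rC.
by rewrite addr0 add0r; apply: oo.
Qed.

Definition mkM (X : {set V}) :=
  MNode s [seq (r \in X, if r \in X then Min r else Mout r) | r <- enum C].

Lemma node_opt (pm : bool) (X : {set V}) : (0 < #|C|)%N -> X \subset C -> (#|X| + pm = b s)%N ->
  (forall x y, x \in X -> y \in C :\: X -> dval s Min Mout x <= dval s Min Mout y) ->
  opt pm (LNode s [seq T r | r <- enum C]) (mkM X) /\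
  mweight w (mkM X) = \sum_(r in C) mweight w (Mout r) + \sum_(r in X) dval s Min Mout r.
Proof.
move=> C0 XC cX G.
have wE : mweight w (mkM X) =
    \sum_(r in C) mweight w (Mout r) + \sum_(r in X) dval s Min Mout r.
  rewrite mweightE big_map big_enum /=.
  have -> : \sum_(r in X) dval s Min Mout r = \sum_(r in C | r \in X) dval s Min Mout r.
    apply: eq_bigl => r; case rX: (r \in X); rewrite ?andbT ?andbF //.
    by rewrite (subsetP XC _ rX).
  rewrite big_mkcondr /= -big_split /=; apply: eq_bigr => r rC.
  case: (r \in X) => /=; last by rewrite add0r addr0.
  have [eM _ _] := oin rC.
  by rewrite -mlabel_erase eM lab // /dval addrC subrK.
split=> //; split.
- rewrite /=; congr LNode; rewrite -map_comp; apply/eq_in_map => r; rewrite mem_enum => rC /=.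
  by case: (r \in X); [case: (oin rC) | case: (oout rC)].
- rewrite /=; apply/andP; split.
    apply/orP; right.
    have -> : count (fun c => c.1) [seq (r \in X, if r \in X then Min r else Mout r) | r <- enum C] = #|X|.
      rewrite count_map count_enumE; apply: eq_card => r; rewrite !inE /=.
      case rX: (r \in X); rewrite ?andbT ?andbF //; by rewrite (subsetP XC _ rX).
    by rewrite cX.
  rewrite all_map; apply/allP => r; rewrite mem_enum => rC /=.
  by case: (r \in X); [case: (oin rC) | case: (oout rC)].
- case=> s' cs' eM pM; move: eM => /= [es ecs]; subst s'.
  have [g [Ecs Hg]] := @decomp T (enum C) cs' (enum_uniq _) ecs.
  subst cs'.
  have Hg' : forall r, r \in C -> erase (g r).2 = T r /\ perfect_from b (g r).1 (g r).2.
    move=> r rC; split; first by apply: Hg; rewrite mem_enum.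
    case/andP: pM => _; rewrite all_map => /allP pa.
    by apply: (pa r); rewrite mem_enum.
  change (mweight w (mkM X) <= mweight w (MNode s [seq g r | r <- enum C])).
  have := weight_lb Hg'; apply: le_trans. rewrite wE lerD2l; apply: exch G => //.
    by apply/subsetP => r; rewrite inE => /andP[].
  move: pM => /= /andP[H _]; case/orP: H => [nl|/eqP cnt].
    by move: nl; rewrite /nilp size_map -cardE; move/eqP=> h; move: C0; rewrite h.
  move: cnt; rewrite count_map count_enumE -cX => /eqP; rewrite eqn_add2r => /eqP <-.
  by apply: eq_card => r; rewrite !inE.
Qed.

End Node.
End Tree.

Unset Implicit Arguments.

Section Main.
Variables (R : realFieldType) (V : finType) (e : rel V)
  (w : V -> V -> R) (b : V -> nat) (A : nat -> {set V * V}).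
Hypothesis w_sym : forall i j, e i j -> w i j = w j i.
Hypothesis b_pos : forall i, (0 < b i)%N.
Hypothesis deg_b : forall i, (b i + 1 <= #|nbr e i|)%N.

Lemma lab_branch t r i : llabel (branch e A t r i) = r.
Proof. by elim: t => //= t IH; case: ifP. Qed.

Lemma get_funs t (C : {set V}) i :
  (forall r, r \in C -> exists Min Mout,
     [/\ opt w b true (branch e A t r i) Min, opt w b false (branch e A t r i) Mout &
      msg e w b A t r i = w r i + mweight w Min - mweight w Mout]) ->
  exists Min Mout : V -> mtree V, forall r, r \in C ->
     [/\ opt w b true (branch e A t r i) (Min r), opt w b false (branch e A t r i) (Mout r) &
      msg e w b A t r i = w r i + mweight w (Min r) - mweight w (Mout r)].
Proof.
move=> H.
have [f Hf] := @fin_choice V _ (MNode i [::], MNode i [::])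
  (fun r p => [/\ opt w b true (branch e A t r i) p.1, opt w b false (branch e A t r i) p.2 &
      msg e w b A t r i = w r i + mweight w p.1 - mweight w p.2]) (enum C)
  (fun r rC => let: ex_intro Mi (ex_intro Mo h) := H r (etrans (esym (mem_enum _ _)) rC)
               in ex_intro _ (Mi, Mo) h).
exists (fun r => (f r).1), (fun r => (f r).2) => r rC; apply: Hf; by rewrite mem_enum.
Qed.

Lemma dval_msg t i (C : {set V}) Min Mout : C \subset nbr e i ->
  (forall r, r \in C -> msg e w b A t r i = w r i + mweight w (Min r) - mweight w (Mout r)) ->
  forall r, r \in C -> dval w i Min Mout r = msg e w b A t r i.
Proof.
move=> Cn H r rC; rewrite H // /dval w_sym //.
by move/subsetP: Cn => /(_ r rC); rewrite inE.
Qed.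

Lemma branch_opt t : forall i j, exists Min Mout,
  [/\ opt w b true (branch e A t i j) Min, opt w b false (branch e A t i j) Mout &
   msg e w b A t i j = w i j + mweight w Min - mweight w Mout].
Proof.
elim: t => [|t IH] i j.
  have leaf pm : opt w b pm (branch e A 0 i j) (MNode i [::]).
    split=> //= -[s cs] /= [_]; case: cs => //= _ _.
  exists (MNode i [::]), (MNode i [::]); split=> //=.
  by rewrite addr0 subr0.
rewrite /=; case: ifP => hA; last exact: IH.
set C := nbr e i :\ j.
have [Min [Mout HM]] := @get_funs t C i (fun r _ => IH r i).
have oin r : r \in C -> opt w b true (branch e A t r i) (Min r) by case/HM.
have oout r : r \in C -> opt w b false (branch e A t r i) (Mout r) by case/HM.
have lab r : r \in C -> llabel (branch e A t r i) = r by move=> _; exact: lab_branch.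
have CS : C \subset nbr e i by apply/subsetP => r; rewrite inE => /andP[].
have cC : (b i <= #|C|)%N.
  have := deg_b i; rewrite (cardsD1 j) -/C; have := leq_b1 (j \in nbr e i).
  move=> h1 h2; rewrite -(leq_add2r 1); apply: (leq_trans h2); rewrite addnC.
  exact: leq_add.
have C0 : (0 < #|C|)%N by apply: leq_trans (b_pos i) cC.
set d := dval w i Min Mout.
have bP : ((b i).-1 < #|C|)%N by rewrite prednK.
have cI : (#|Xq C d (b i).-1| + true)%N = b i.
  rewrite card_Xq; last exact: ltnW.
  by rewrite addn1 prednK.
have cO : (#|Xq C d (b i)| + false)%N = b i by rewrite card_Xq // addn0.
have [oI wI] := @node_opt R V w b i C (fun r => branch e A t r i) Min Mout lab oin oout
   true (Xq C d (b i).-1) C0 (Xq_sub C d _) cI (@greedy_Xq R V C d _).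
have [oO wO] := @node_opt R V w b i C (fun r => branch e A t r i) Min Mout lab oin oout
   false (Xq C d (b i)) C0 (Xq_sub C d _) cO (@greedy_Xq R V C d _).
exists (mkM i C Min Mout (Xq C d (b i).-1)), (mkM i C Min Mout (Xq C d (b i))).
split=> //; rewrite wI wO.
have -> : [seq msg e w b A t l i | l <- enum C] = [seq d r | r <- enum C].
  apply/eq_in_map => r; rewrite mem_enum => rC.
  symmetry; apply: (@dval_msg t i C Min Mout CS) => // r' r'C; by case: (HM r' r'C).
have := @sum_Xq_step R V C d _ bP; rewrite prednK // => ->.
ring.
Qed.

End Main.


Theorem corollary2 (R : realFieldType) (V : finType) (e : rel V)
  (w : V -> V -> R) (b : V -> nat) (A : nat -> {set V * V})
  (e_sym : symmetric e) (e_irr : irreflexive e)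
  (w_sym : forall i j, e i j -> w i j = w j i)
  (b_pos : forall i, (0 < b i)%N)
  (deg_b : forall i, (b i + 1 <= #|nbr e i|)%N)
  (A_dir : forall t p, p \in A t -> e p.1 p.2)
  (A_sched : forall (t s : nat) (i j : V), (1 <= t)%N -> (1 <= s)%N ->
      (i, j) \in A t -> (i, j) \in A (t + s)%N ->
      (forall r, (1 <= r < s)%N -> (i, j) \notin A (t + r)%N) ->
      exists l r, [/\ l \in nbr e i :\ j, (1 <= r < s)%N & (l, i) \in A (t + r)%N]) :
  forall (i : V) (t : nat) (S : {set V}),
    is_E e w b A t i S ->
    exists M : mtree V,
      min_perfect_matching w b (comp_tree e A t i) M /\ root_matched M = S.
Proof.
move=> i t S [SN cS G].
set C := nbr e i.
have [Min [Mout HM]] := @get_funs R V e w b A t C i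
  (fun r _ => @branch_opt R V e w b A w_sym b_pos deg_b t r i).
have oin r : r \in C -> opt w b true (branch e A t r i) (Min r) by case/HM.
have oout r : r \in C -> opt w b false (branch e A t r i) (Mout r) by case/HM.
have lab r : r \in C -> llabel (branch e A t r i) = r by move=> _; exact: lab_branch.
have C0 : (0 < #|C|)%N by apply: leq_trans (deg_b i); rewrite addn1.
have cX : (#|S| + false)%N = b i by rewrite addn0.
have G' : forall x y, x \in S -> y \in C :\: S -> dval w i Min Mout x <= dval w i Min Mout y.
  move=> x y xS yC.
  have xC : x \in C by apply: (subsetP SN).
  have yC' : y \in C by move: yC; rewrite inE => /andP[].
  have H r' (r'C : r' \in C) := let: And3 _ _ h := HM r' r'C in h.
  rewrite (@dval_msg R V e w b A w_sym t i C Min Mout (subxx _) H x xC).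
  rewrite (@dval_msg R V e w b A w_sym t i C Min Mout (subxx _) H y yC').
  exact: G.
have [[eM pM oM] _] := @node_opt R V w b i C (fun r => branch e A t r i) Min Mout lab oin oout
   false S C0 SN cX G'.
exists (mkM i C Min Mout S); split; first by split.
apply/setP => x; rewrite /root_matched /mkM inE has_map.
apply/hasP/idP.
  case=> r; rewrite mem_enum => rC /= /andP[rS /eqP <-].
  rewrite rS -mlabel_erase; by case: (oin r rC) => -> _ _; rewrite lab_branch.
move=> xS; have xC : x \in C by apply: (subsetP SN).
exists x; first by rewrite mem_enum.
rewrite /= xS /= -mlabel_erase; by case: (oin x xC) => -> _ _; rewrite lab_branch.
Qed.
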